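(* Let $G$ be a finitely generated group and $\psi$ a minimal action of $G$ by orientation-preserving homeomorphisms of $\mathbb{R}$ such that some nondegenerate bounded interval is $\psi$-contractible, but not every bounded interval is $\psi$-contractible. Define $\varphi(x) := \sup\{ y > x : [x,y] \text{ is } \psi\text{-contractible}\}$. Then $\varphi$ is a (finite-valued) orientation-preserving homeomorphism of $\mathbb{R}$ satisfying $\varphi(x)>x$ for all $x$ and $\varphi\circ\psi(g)=\psi(g)\circ\varphi$ for all $g\in G$. Consequently $\psi$ induces an action of $G$ by homeomorphisms on the quotient $\mathbb{R}/\!\sim$, where $x\sim\varphi(x)$, which is a topological circle.
   Context: A bounded interval $I$ is $\psi$-contractible if there is a sequence $g_n\in G$ such that the intervals $\psi(g_n)(I)$ converge to a point (their lengths tend to $0$ and they converge to a single point). A minimal action is one where every orbit is dense. *)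

(* Defs.v *)
From Stdlib Require Import Reals Relations List.
Open Scope R_scope.

Record Group := {
  gcar :> Type;
  gmul : gcar -> gcar -> gcar;
  ginv : gcar -> gcar;
  gone : gcar;
  gmul_assoc : forall a b c, gmul a (gmul b c) = gmul (gmul a b) c;
  gmul_one_l : forall a, gmul gone a = a;
  gmul_one_r : forall a, gmul a gone = a;
  gmul_inv_l : forall a, gmul (ginv a) a = gone;
  gmul_inv_r : forall a, gmul a (ginv a) = gone
}.

Inductive generated (G : Group) (S : list (gcar G)) : gcar G -> Prop :=
| gen_base : forall s, In s S -> generated G S s
| gen_one : generated G S (gone G)
| gen_mul : forall a b, generated G S a -> generated G S b -> generated G S (gmul G a b)
| gen_inv : forall a, generated G S a -> generated G S (ginv G a).

Definition finitely_generated (G : Group) : Prop :=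
  exists S : list (gcar G), forall g, generated G S g.

Definition oph (f : R -> R) : Prop :=
  continuity f /\
  (exists h : R -> R, continuity h /\ (forall x, h (f x) = x) /\ (forall y, f (h y) = y)) /\
  (forall x y, x < y -> f x < f y).

Definition oph_action (G : Group) (psi : gcar G -> R -> R) : Prop :=
  (forall g, oph (psi g)) /\
  (forall x, psi (gone G) x = x) /\
  (forall g h x, psi (gmul G g h) x = psi g (psi h x)).

Definition minimal_action (G : Group) (psi : gcar G -> R -> R) : Prop :=
  forall x y eps, 0 < eps -> exists g, Rabs (psi g x - y) < eps.

(** The bounded interval with endpoints a <= b is psi-contractible: some
    sequence of images psi(g_n)(I) = [psi g_n a, psi g_n b] has length
    tending to 0 and converges to a single point p. (Since each psi g is
    increasing, this depends only on the endpoints, not on whether the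
    interval is open/closed.) *)
Definition contractible (G : Group) (psi : gcar G -> R -> R) (a b : R) : Prop :=
  exists (gs : nat -> gcar G) (p : R),
    Un_cv (fun n => psi (gs n) b - psi (gs n) a) 0 /\
    Un_cv (fun n => psi (gs n) a) p /\
    Un_cv (fun n => psi (gs n) b) p.

Definition on_circle (z : R * R) : Prop := fst z ^ 2 + snd z ^ 2 = 1.

Definition dist2 (z w : R * R) : R :=
  sqrt ((fst z - fst w) ^ 2 + (snd z - snd w) ^ 2).

Definition circle_open (U : R * R -> Prop) : Prop :=
  forall z, U z -> exists eps, 0 < eps /\
    forall w, on_circle w -> dist2 w z < eps -> U w.

Definition R_open (V : R -> Prop) : Prop :=
  forall x, V x -> exists eps, 0 < eps /\ forall y, Rabs (y - x) < eps -> V y.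

Definition circle_continuous (h : R * R -> R * R) : Prop :=
  forall z, on_circle z -> forall eps, 0 < eps -> exists delta, 0 < delta /\
    forall w, on_circle w -> dist2 w z < delta -> dist2 (h w) (h z) < eps.

Definition circle_homeo (h : R * R -> R * R) : Prop :=
  (forall z, on_circle z -> on_circle (h z)) /\ circle_continuous h /\
  exists k : R * R -> R * R,
    (forall z, on_circle z -> on_circle (k z)) /\ circle_continuous k /\
    (forall z, on_circle z -> k (h z) = z) /\
    (forall z, on_circle z -> h (k z) = z).

Definition phi_equiv (phi : R -> R) : R -> R -> Prop :=
  clos_refl_sym_trans R (fun x y => y = phi x).

(* Main.v *)
Require Import Defs.
From Stdlib Require Import Reals Relations List Lra Lia ZArith Classical ClassicalEpsilon.
Open Scope R_scope.

Lemma incr_le (f : R -> R) : (forall x y, x < y -> f x < f y) ->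
  forall x y, x <= y -> f x <= f y.
Proof. intros H x y [h|h]. left; auto. subst; lra. Qed.

Lemma incr_le_rev (f : R -> R) : (forall x y, x < y -> f x < f y) ->
  forall x y, f x <= f y -> x <= y.
Proof. intros H x y h. destruct (Rle_lt_dec x y) as [|c]; auto. apply H in c; lra. Qed.

Lemma incr_lt_rev (f : R -> R) : (forall x y, x < y -> f x < f y) ->
  forall x y, f x < f y -> x < y.
Proof. intros H x y h. destruct (Rlt_le_dec x y) as [|c]; auto.
  apply (incr_le f H) in c; lra. Qed.

Lemma incr_inj (f : R -> R) : (forall x y, x < y -> f x < f y) ->
  forall x y, f x = f y -> x = y.
Proof. intros H x y h. destruct (Rtotal_order x y) as [c|[c|c]]; auto;
  apply H in c; lra. Qed.

Lemma incr_surj_cont (f : R -> R) : (forall x y, x < y -> f x < f y) ->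
  (forall y, exists x, f x = y) -> continuity f.
Proof.
  intros Hi Hs x eps Heps.
  destruct (Hs (f x - eps)) as [y1 Hy1]. destruct (Hs (f x + eps)) as [y2 Hy2].
  assert (y1 < x) by (apply (incr_lt_rev f Hi); lra).
  assert (x < y2) by (apply (incr_lt_rev f Hi); lra).
  exists (Rmin (x - y1) (y2 - x)). split.
  apply Rmin_glb_lt; lra.
  intros y [_ Hy]. simpl in *. unfold R_dist in *.
  unfold Rmin in Hy; destruct (Rle_dec (x - y1) (y2 - x));
  apply Rabs_def2 in Hy; destruct Hy;
  assert (f y1 < f y) by (apply Hi; lra);
  assert (f y < f y2) by (apply Hi; lra);
  apply Rabs_def1; lra.
Qed.

Lemma lub_transport (E E' : R -> Prop) (f f' : R -> R) m :
  (forall x y, x < y -> f x < f y) -> (forall x y, x < y -> f' x < f' y) ->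
  (forall x, f' (f x) = x) -> (forall y, f (f' y) = y) ->
  (forall z, E' z <-> E (f' z)) -> is_lub E m -> is_lub E' (f m).
Proof.
  intros Hf Hf' K1 K2 HE [Hub Hl]. split.
  - intros z Hz. apply HE in Hz. apply Hub in Hz.
    rewrite <- (K2 z). apply (incr_le f Hf); auto.
  - intros b Hb. rewrite <- (K2 b). apply (incr_le f Hf). apply Hl.
    intros z Hz. rewrite <- (K1 z). apply (incr_le f' Hf'). apply Hb.
    apply HE. rewrite K1. auto.
Qed.

Lemma lub_fixed (E : R -> Prop) (f f' : R -> R) m :
  (forall x y, x < y -> f x < f y) -> (forall x y, x < y -> f' x < f' y) ->
  (forall x, f' (f x) = x) -> (forall y, f (f' y) = y) ->
  (forall z, E z <-> E (f' z)) -> is_lub E m -> f m = m.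
Proof.
  intros. apply (is_lub_u E); auto. eapply lub_transport; eauto.
Qed.

Lemma squeeze (a b c : nat -> R) l : (forall n, a n <= c n <= b n) ->
  Un_cv a l -> Un_cv b l -> Un_cv c l.
Proof.
  intros H Ha Hb eps He. destruct (Ha eps He) as [N1 H1]. destruct (Hb eps He) as [N2 H2].
  exists (max N1 N2). intros n Hn. specialize (H1 n ltac:(lia)). specialize (H2 n ltac:(lia)).
  specialize (H n). unfold R_dist in *. apply Rabs_def2 in H1. apply Rabs_def2 in H2.
  apply Rabs_def1; lra.
Qed.
Section Dyn.
Variable G : Group.
Variable psi : gcar G -> R -> R.
Hypothesis hact : oph_action G psi.
Hypothesis hmin : minimal_action G psi.

Lemma ps_incr g : forall x y, x < y -> psi g x < psi g y.
Proof. destruct hact as [H _]. apply (H g). Qed.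

Lemma ps_inv1 g x : psi (ginv G g) (psi g x) = x.
Proof. destruct hact as [_ [H1 H2]]. rewrite <- H2, gmul_inv_l. auto. Qed.

Lemma ps_inv2 g x : psi g (psi (ginv G g) x) = x.
Proof. destruct hact as [_ [H1 H2]]. rewrite <- H2, gmul_inv_r. auto. Qed.

Lemma ps_mul g h x : psi (gmul G g h) x = psi g (psi h x).
Proof. destruct hact as [_ [H1 H2]]. auto. Qed.

Lemma ps_one x : psi (gone G) x = x.
Proof. destruct hact as [_ [H1 H2]]. auto. Qed.

Lemma nofix m : (forall g, psi g m = m) -> False.
Proof.
  intros H. destruct (hmin m (m+1) (1/2)) as [g Hg]. lra.
  rewrite H in Hg. apply Rabs_def2 in Hg. lra.
Qed.

Lemma find_in x a b : a < b -> exists g, a < psi g x < b.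
Proof.
  intros h. destruct (hmin x ((a+b)/2) ((b-a)/2)) as [g Hg]. lra.
  exists g. apply Rabs_def2 in Hg. lra.
Qed.

Definition C a b := contractible G psi a b.

Lemma C_intro a b gs p : Un_cv (fun n => psi (gs n) a) p -> Un_cv (fun n => psi (gs n) b) p -> C a b.
Proof.
  intros H1 H2. exists gs, p. split; auto.
  replace 0 with (p - p) by ring. apply CV_minus; auto.
Qed.

Lemma C_sub a b c d : C a b -> a <= c -> c <= d -> d <= b -> C c d.
Proof.
  intros [gs [p [_ [Ha Hb]]]] h1 h2 h3. apply (C_intro _ _ gs p).
  - apply (squeeze (fun n => psi (gs n) a) (fun n => psi (gs n) b)); auto.
    intros n; split; apply (incr_le _ (ps_incr (gs n))); lra.
  - apply (squeeze (fun n => psi (gs n) a) (fun n => psi (gs n) b)); auto.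
    intros n; split; apply (incr_le _ (ps_incr (gs n))); lra.
Qed.

Lemma C_img h a b : C a b -> C (psi h a) (psi h b).
Proof.
  intros [gs [p [_ [Ha Hb]]]]. apply (C_intro _ _ (fun n => gmul G (gs n) (ginv G h)) p).
  - eapply Un_cv_ext; [|exact Ha]. intros n; simpl. rewrite ps_mul, ps_inv1. auto.
  - eapply Un_cv_ext; [|exact Hb]. intros n; simpl. rewrite ps_mul, ps_inv1. auto.
Qed.

Lemma C_img_iff h a b : C (psi h a) (psi h b) <-> C a b.
Proof.
  split; [|apply C_img]. intros H. apply (C_img (ginv G h)) in H.
  rewrite !ps_inv1 in H. auto.
Qed.

Definition Sset x y := x < y /\ C x y.

Lemma S_ne (hsome : exists a b, a < b /\ C a b) x : exists y, Sset x y.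
Proof.
  destruct hsome as [a [b [hab Hc]]]. destruct (find_in x a b hab) as [g Hg].
  exists (psi (ginv G g) b). split.
  - rewrite <- (ps_inv1 g x) at 1. apply ps_incr. lra.
  - rewrite <- (ps_inv1 g x). apply C_img. apply (C_sub a b); try lra; auto.
Qed.

Lemma S_bnd (hnot : ~ (forall a b, a <= b -> C a b)) x : bound (Sset x).
Proof.
  apply NNPP. intros Hn. apply hnot. intros a b hab.
  destruct (hmin x (a-1) 1) as [h Hh]. lra. apply Rabs_def2 in Hh.
  assert (exists y, Sset x y /\ psi (ginv G h) b < y) as [y [[_ Hy] Hy2]].
  { apply NNPP; intros Hc. apply Hn. exists (psi (ginv G h) b). intros y Hy.
    destruct (Rle_lt_dec y (psi (ginv G h) b)); auto. exfalso; apply Hc; eauto. }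
  apply (ps_incr h) in Hy2. rewrite ps_inv2 in Hy2.
  apply (C_img h) in Hy. apply (C_sub _ _ a b Hy). all: lra.
Qed.

Lemma S_down x y y' : Sset x y -> x < y' -> y' <= y -> Sset x y'.
Proof. intros [h1 h2] h3 h4. split; auto. apply (C_sub x y); auto; lra. Qed.

End Dyn.
Section Phi.
Variable G : Group.
Variable psi : gcar G -> R -> R.
Hypothesis hact : oph_action G psi.
Hypothesis hmin : minimal_action G psi.
Variable phi : R -> R.
Hypothesis Hphi : forall x, is_lub (Sset G psi x) (phi x).
Hypothesis Hne : forall x, exists y, Sset G psi x y.

Lemma phi_gt x : x < phi x.
Proof.
  destruct (Hne x) as [y Hy]. destruct (Hphi x) as [H _].
  pose proof (H y Hy). destruct Hy. lra.
Qed.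

Lemma phi_eqv g x : phi (psi g x) = psi g (phi x).
Proof.
  symmetry. apply (is_lub_u (Sset G psi (psi g x))); auto.
  apply (lub_transport (Sset G psi x) _ (psi g) (psi (ginv G g))).
  - apply ps_incr; auto.
  - apply ps_incr; auto.
  - apply ps_inv1; auto.
  - apply ps_inv2; auto.
  - intros z. unfold Sset. rewrite <- (C_img_iff G psi hact g x).
    rewrite ps_inv2 by auto. split; intros [h1 h2]; split; auto.
    + rewrite <- (ps_inv1 G psi hact g x). apply ps_incr; auto.
    + apply (ps_incr G psi hact g) in h1. rewrite ps_inv2 in h1; auto.
  - auto.
Qed.

Lemma phi_mono x x' : x <= x' -> phi x <= phi x'.
Proof.
  intros hx. destruct (Hphi x) as [_ H]. apply H. intros y Hy.
  destruct (Rle_lt_dec y x') as [h|h].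
  - pose proof (phi_gt x'); lra.
  - destruct (Hphi x') as [H' _]. apply H'. destruct Hy as [h1 h2]. split; auto.
    apply (C_sub G psi hact x y); auto; lra.
Qed.

Lemma phi_below c : exists y, phi y < c.
Proof.
  apply NNPP. intros Hn.
  assert (Hge : forall y, c <= phi y).
  { intros y. apply Rnot_lt_le. intros h. apply Hn. eauto. }
  set (L := fun z => forall y, z <= phi y).
  destruct (completeness L) as [m Hm].
  { exists (phi 0). intros z Hz. apply Hz. }
  { exists c. exact Hge. }
  apply (nofix G psi hmin m). intros g.
  apply (lub_fixed L (psi g) (psi (ginv G g))); auto.
  - apply ps_incr; auto.
  - apply ps_incr; auto.
  - apply ps_inv1; auto.
  - apply ps_inv2; auto.
  - intros z. unfold L. split; intros Hz y.
    + rewrite <- (ps_inv1 G psi hact g (phi y)). rewrite <- (phi_eqv g y).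
      apply (incr_le _ (ps_incr G psi hact (ginv G g))). apply Hz.
    + rewrite <- (ps_inv2 G psi hact g z). rewrite <- (ps_inv2 G psi hact g y).
      rewrite phi_eqv. apply (incr_le _ (ps_incr G psi hact g)). apply Hz.
Qed.


Lemma phi_strict x x' : x < x' -> phi x < phi x'.
Proof.
  intros hx. destruct (Rlt_le_dec (phi x) (phi x')) as [|hle]; auto. exfalso.
  pose proof (phi_mono x x' ltac:(lra)) as hm.
  assert (Hx' : phi x' = phi x) by lra.
  set (A := fun y => phi y < phi x).
  destruct (completeness A) as [a0 [Hub Hl]].
  { exists x. intros y Hy. unfold A in Hy. destruct (Rle_lt_dec y x); auto.
    pose proof (phi_mono x y ltac:(lra)). lra. }
  { destruct (phi_below (phi x)) as [y Hy]. exists y. exact Hy. }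
  assert (Ha0x : a0 <= x).
  { apply Hl. intros y Hy. unfold A in Hy. destruct (Rle_lt_dec y x); auto.
    pose proof (phi_mono x y ltac:(lra)). lra. }
  assert (F1 : forall y, a0 < y -> phi x <= phi y).
  { intros y hy. apply Rnot_lt_le. intros h. pose proof (Hub y h). lra. }
  assert (F2 : forall y, y < a0 -> phi y < phi x).
  { intros y hy. apply Rnot_le_lt. intros h.
    assert (a0 <= y); [|lra]. apply Hl. intros y' Hy'. unfold A in Hy'.
    destruct (Rle_lt_dec y' y) as [|h2]; auto. pose proof (phi_mono y y' ltac:(lra)). lra. }
  assert (F3 : forall y, a0 < y -> y <= x' -> phi y = phi x).
  { intros y h1 h2. pose proof (F1 y h1). pose proof (phi_mono y x' h2). lra. }
  destruct (find_in G psi hmin a0 a0 x' ltac:(lra)) as [g Hg].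
  set (t := (psi g a0 + x') / 2).
  set (y := Rmin x' (psi (ginv G g) t)).
  assert (Hy1 : a0 < psi (ginv G g) t).
  { rewrite <- (ps_inv1 G psi hact g a0) at 1. apply ps_incr; auto. unfold t; lra. }
  assert (Hy2 : a0 < y) by (unfold y; apply Rmin_glb_lt; lra).
  assert (Hy3 : y <= x') by (unfold y; apply Rmin_l).
  assert (Hy4 : psi g y <= t).
  { rewrite <- (ps_inv2 G psi hact g t). apply (incr_le _ (ps_incr G psi hact g)).
    unfold y; apply Rmin_r. }
  assert (Hy5 : psi g a0 < psi g y) by (apply ps_incr; auto).
  assert (Hfix : psi g (phi x) = phi x).
  { rewrite <- (F3 y) at 1 by auto. rewrite <- phi_eqv. apply F3; unfold t in *; lra. }
  set (w := (a0 + psi g a0) / 2).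
  assert (Hw : phi w = phi x) by (apply F3; unfold w; lra).
  set (v := psi (ginv G g) w).
  assert (Hv : v < a0).
  { unfold v. rewrite <- (ps_inv1 G psi hact g a0). apply ps_incr; auto. unfold w; lra. }
  pose proof (F2 v Hv) as Hpv.
  assert (Hw2 : phi w = psi g (phi v)).
  { rewrite <- phi_eqv. unfold v. rewrite ps_inv2; auto. }
  apply (ps_incr G psi hact g) in Hpv. lra.
Qed.

Lemma phi_surj c : exists x, phi x = c.
Proof.
  apply NNPP. intros Hn.
  assert (Hne' : forall y, phi y <> c) by (intros y h; apply Hn; eauto).
  set (A := fun y => phi y < c).
  destruct (completeness A) as [x0 [Hub Hl]].
  { exists c. intros y Hy. unfold A in Hy. pose proof (phi_gt y). lra. }
  { destruct (phi_below c) as [y Hy]. exists y. exact Hy. }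
  assert (F1 : forall y, x0 < y -> c < phi y).
  { intros y hy. destruct (Rtotal_order (phi y) c) as [h|[h|h]]; auto.
    - pose proof (Hub y h). lra.
    - exfalso; eapply Hne'; eauto. }
  assert (F2 : forall y, y < x0 -> phi y < c).
  { intros y hy. apply Rnot_le_lt. intros h.
    assert (x0 <= y); [|lra]. apply Hl. intros y' Hy'. unfold A in Hy'.
    destruct (Rle_lt_dec y' y) as [|h2]; auto. pose proof (phi_mono y y' ltac:(lra)). lra. }
  destruct (Rtotal_order (phi x0) c) as [h|[h|h]].
  - destruct (find_in G psi hmin (phi x0) (phi x0) c h) as [g Hg].
    rewrite <- phi_eqv in Hg.
    destruct (Rle_lt_dec (psi g x0) x0) as [h2|h2].
    + pose proof (phi_mono _ _ h2). lra.
    + pose proof (F1 _ h2). lra.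
  - apply (Hne' x0 h).
  - destruct (find_in G psi hmin (phi x0) c (phi x0) h) as [g Hg].
    rewrite <- phi_eqv in Hg.
    destruct (Rle_lt_dec x0 (psi g x0) ) as [h2|h2].
    + pose proof (phi_mono _ _ h2). lra.
    + pose proof (F2 _ h2). lra.
Qed.
End Phi.
Definition ecirc (s : R) : R * R := (cos (2 * PI * s), sin (2 * PI * s)).

Lemma ecirc_on s : on_circle (ecirc s).
Proof.
  unfold on_circle, ecirc; simpl. pose proof (sin2_cos2 (2*PI*s)). unfold Rsqr in H. lra.
Qed.

Lemma ecirc_shift s (k : Z) : ecirc (s + IZR k) = ecirc s.
Proof.
  unfold ecirc. replace (2 * PI * (s + IZR k)) with (2 * PI * s + 2 * (IZR k * PI)) by ring.
  assert (h0 : sin (IZR k * PI) = 0) by (apply sin_eq_0_1; eauto).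
  assert (h1 : cos (2 * (IZR k * PI)) = 1) by (rewrite cos_2a_sin, h0; ring).
  assert (h2 : sin (2 * (IZR k * PI)) = 0) by (rewrite sin_2a, h0; ring).
  rewrite cos_plus, sin_plus, h1, h2. f_equal; ring.
Qed.

Lemma ecirc_eq s t : ecirc s = ecirc t -> exists k : Z, s = t + IZR k.
Proof.
  unfold ecirc. intros H. injection H as H1 H2.
  set (A := 2*PI*s) in *. set (B := 2*PI*t) in *.
  assert (hc : cos (A - B) = 1).
  { rewrite cos_minus, H1, H2. pose proof (sin2_cos2 B). unfold Rsqr in *. lra. }
  replace (A - B) with (2 * ((A - B)/2)) in hc by field.
  rewrite cos_2a_sin in hc.
  assert (hs : sin ((A - B)/2) = 0).
  { assert (sin ((A-B)/2) * sin ((A-B)/2) = 0) by lra.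
    destruct (Rmult_integral _ _ H); auto. }
  destruct (sin_eq_0_0 _ hs) as [k Hk]. exists k.
  unfold A, B in Hk. pose proof PI_RGT_0.
  apply (Rmult_eq_reg_l PI); [|lra].
  replace (PI * s) with (PI * t + (2 * PI * s - 2 * PI * t) / 2) by field. rewrite Hk. ring.
Qed.

Lemma ecirc_surj z : on_circle z -> exists s, ecirc s = z.
Proof.
  destruct z as [u v]. unfold on_circle; simpl. intros H.
  assert (hu : -1 <= u <= 1).
  { assert (u * u <= 1) by nra. split; nra. }
  assert (hsq : sqrt (1 - u²) = Rabs v).
  { rewrite <- sqrt_Rsqr_abs. f_equal. unfold Rsqr. lra. }
  pose proof PI_RGT_0.
  destruct (Rle_lt_dec 0 v) as [hv|hv].
  - exists (acos u / (2 * PI)). unfold ecirc.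
    replace (2 * PI * (acos u / (2 * PI))) with (acos u) by (field; lra).
    rewrite cos_acos, sin_acos, hsq, Rabs_right; auto; lra.
  - exists (- acos u / (2 * PI)). unfold ecirc.
    replace (2 * PI * (- acos u / (2 * PI))) with (- acos u) by (field; lra).
    rewrite cos_neg, sin_neg, cos_acos, sin_acos, hsq, Rabs_left; auto. f_equal; ring.
Qed.

Lemma dist2_ecirc s t : dist2 (ecirc s) (ecirc t) = 2 * Rabs (sin (PI * (s - t))).
Proof.
  unfold dist2, ecirc; cbn [fst snd].
  assert (E : (cos (2 * PI * s) - cos (2 * PI * t)) ^ 2 + (sin (2 * PI * s) - sin (2 * PI * t)) ^ 2
    = (2 * sin (PI * (s - t)))²).
  { pose proof (sin2_cos2 (2*PI*s)). pose proof (sin2_cos2 (2*PI*t)).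
    pose proof (cos_minus (2*PI*s) (2*PI*t)). pose proof (cos_2a_sin (PI * (s - t))).
    replace (2 * (PI * (s - t))) with (2*PI*s - 2*PI*t) in * by ring.
    unfold Rsqr in *. nra. }
  rewrite E, sqrt_Rsqr_abs, Rabs_mult, (Rabs_right 2); lra.
Qed.

Lemma sin_mono_le x y : 0 <= x -> x <= y -> y <= PI/2 -> sin x <= sin y.
Proof.
  intros h1 h2 h3. pose proof PI_RGT_0. destruct h2 as [h2|h2].
  - left. apply sin_increasing_1; lra.
  - subst; lra.
Qed.

Lemma ecirc_open t eps : 0 < eps -> exists d, 0 < d /\ forall w, on_circle w ->
  dist2 w (ecirc t) < d -> exists s, Rabs (s - t) < eps /\ ecirc s = w.
Proof.
  intros he. pose proof PI_RGT_0. set (e' := Rmin eps (1/2)).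
  assert (he1 : 0 < e') by (apply Rmin_glb_lt; lra).
  assert (he2 : e' <= eps) by apply Rmin_l.
  assert (he3 : e' <= 1/2) by apply Rmin_r.
  exists (2 * sin (PI * e')). split.
  { assert (0 < sin (PI * e')) by (apply sin_gt_0; nra). lra. }
  intros w hw hd. destruct (ecirc_surj w hw) as [s0 Hs0].
  destruct (archimed (s0 - t - 1/2)) as [ha1 ha2].
  set (k := up (s0 - t - 1/2)) in *.
  exists (s0 + IZR (- k)). split.
  2:{ rewrite ecirc_shift; auto. }
  rewrite <- Hs0, <- (ecirc_shift s0 (- k)), dist2_ecirc in hd.
  rewrite opp_IZR in *. set (d := s0 + - IZR k - t) in *.
  assert (hd1 : -1/2 <= d < 1/2) by (unfold d; lra).
  apply Rnot_le_lt. intros hc.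
  assert (Hs : sin (PI * e') <= Rabs (sin (PI * d))).
  { destruct (Rle_lt_dec 0 d) as [h0|h0].
    - rewrite Rabs_right in hc by lra. rewrite Rabs_right.
      + apply sin_mono_le; nra.
      + apply Rle_ge, sin_ge_0; nra.
    - rewrite Rabs_left in hc by lra.
      replace (PI * d) with (- (PI * (- d))) by ring. rewrite sin_neg, Rabs_Ropp.
      rewrite Rabs_right.
      + apply sin_mono_le; nra.
      + apply Rle_ge, sin_ge_0; nra. }
  lra.
Qed.
Section Theta.
Variable f fi : R -> R.
Hypothesis Hf : forall x y, x < y -> f x < f y.
Hypothesis Hfc : continuity f.
Hypothesis Hfic : continuity fi.
Hypothesis K1 : forall x, fi (f x) = x.
Hypothesis K2 : forall y, f (fi y) = y.
Hypothesis Hgt : forall x, x < f x.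

Lemma Hfi : forall x y, x < y -> fi x < fi y.
Proof. intros x y h. apply (incr_lt_rev f Hf). rewrite !K2; auto. Qed.

Lemma Hlt : forall x, fi x < x.
Proof. intros x. pose proof (Hgt (fi x)). rewrite K2 in H. auto. Qed.

Definition itZ (n : Z) (x : R) : R :=
  if Z.leb 0 n then Nat.iter (Z.to_nat n) f x else Nat.iter (Z.to_nat (- n)) fi x.

Lemma itZ_0 x : itZ 0 x = x.
Proof. reflexivity. Qed.

Lemma itZ_succ n x : itZ (Z.succ n) x = f (itZ n x).
Proof.
  unfold itZ. destruct (Z.leb_spec 0 n) as [h|h].
  - destruct (Z.leb_spec 0 (Z.succ n)); [|lia].
    rewrite Z2Nat.inj_succ by lia. reflexivity.
  - destruct (Z.leb_spec 0 (Z.succ n)).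
    + assert (n = -1)%Z by lia. subst. simpl. rewrite K2. auto.
    + replace (Z.to_nat (- n)) with (S (Z.to_nat (- Z.succ n))) by lia.
      simpl. rewrite K2. auto.
Qed.

Lemma itZ_pred n x : itZ (Z.pred n) x = fi (itZ n x).
Proof.
  rewrite <- (Z.succ_pred n) at 2. rewrite itZ_succ, K1. auto.
Qed.

Lemma itZ_add m n x : itZ (m + n) x = itZ m (itZ n x).
Proof.
  revert m. apply Z.peano_ind.
  - reflexivity.
  - intros m IH. rewrite Z.add_succ_l, !itZ_succ, IH. auto.
  - intros m IH. rewrite Z.add_pred_l, !itZ_pred, IH. auto.
Qed.

Lemma itZ_incr n : forall x y, x < y -> itZ n x < itZ n y.
Proof.
  induction n using Z.peano_ind; intros x y h.
  - auto.
  - rewrite !itZ_succ. auto.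
  - rewrite !itZ_pred. apply Hfi. auto.
Qed.

Lemma itZ_1 x : itZ 1 x = f x.
Proof. reflexivity. Qed.

Lemma itZ_gt_nat (k : nat) x : x < itZ (Z.of_nat (S k)) x.
Proof.
  induction k.
  - simpl. apply Hgt.
  - rewrite Nat2Z.inj_succ, itZ_succ. pose proof (Hgt (itZ (Z.of_nat (S k)) x)). lra.
Qed.

Lemma itZ_mono_idx m n x : (m < n)%Z -> itZ m x < itZ n x.
Proof.
  intros h. replace n with ((n - m) + m)%Z by lia. rewrite itZ_add.
  replace (n - m)%Z with (Z.of_nat (S (Z.to_nat (n - m - 1)))) by lia.
  apply itZ_gt_nat.
Qed.

Lemma itZ_mono_idx_le m n x : (m <= n)%Z -> itZ m x <= itZ n x.
Proof.
  intros h. destruct (Z.eq_dec m n). subst; lra. left; apply itZ_mono_idx; lia.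
Qed.


Lemma cv_shift (u : nat -> R) L : Un_cv u L -> Un_cv (fun k => u (S k)) L.
Proof. intros H eps he. destruct (H eps he) as [N HN]. exists N. intros n hn. apply HN. lia. Qed.

Lemma up_unb a x : exists k : nat, x < itZ (Z.of_nat k) a.
Proof.
  apply NNPP. intros Hn.
  assert (Hb : forall k, itZ (Z.of_nat k) a <= x).
  { intros k. apply Rnot_lt_le. intros h. apply Hn; eauto. }
  set (u := fun k => itZ (Z.of_nat k) a).
  assert (Hs : forall k, u (S k) = f (u k)).
  { intros k. unfold u. rewrite Nat2Z.inj_succ, itZ_succ. auto. }
  destruct (growing_cv u) as [L HL].
  { intros k. rewrite Hs. left; apply Hgt. }
  { exists x. intros r [i ->]. apply Hb. }
  assert (H1 : Un_cv (fun k => f (u k)) (f L)) by (apply continuity_seq; auto).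
  assert (H2 : Un_cv (fun k => f (u k)) L).
  { eapply Un_cv_ext; [|apply (cv_shift u L HL)]. intros k; simpl. apply Hs. }
  pose proof (UL_sequence _ _ _ H1 H2). pose proof (Hgt L). lra.
Qed.

Lemma down_unb a x : exists k : nat, itZ (- Z.of_nat k) a < x.
Proof.
  apply NNPP. intros Hn.
  assert (Hb : forall k, x <= itZ (- Z.of_nat k) a).
  { intros k. apply Rnot_lt_le. intros h. apply Hn; eauto. }
  set (u := fun k => itZ (- Z.of_nat k) a).
  assert (Hs : forall k, u (S k) = fi (u k)).
  { intros k. unfold u. rewrite Nat2Z.inj_succ. replace (- Z.succ (Z.of_nat k))%Z with (Z.pred (- Z.of_nat k)) by lia.
    rewrite itZ_pred. auto. }
  destruct (decreasing_cv u) as [L HL].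
  { intros k. rewrite Hs. left; apply Hlt. }
  { exists (- x). intros r [i ->]. unfold opp_seq. pose proof (Hb i). unfold u. lra. }
  assert (H1 : Un_cv (fun k => fi (u k)) (fi L)) by (apply continuity_seq; auto).
  assert (H2 : Un_cv (fun k => fi (u k)) L).
  { eapply Un_cv_ext; [|apply (cv_shift u L HL)]. intros k; simpl. apply Hs. }
  pose proof (UL_sequence _ _ _ H1 H2). pose proof (Hlt L). lra.
Qed.

Definition block a x n := itZ n a <= x < itZ (Z.succ n) a.

Lemma block_ex a x : exists n, block a x n.
Proof.
  destruct (down_unb a x) as [k1 H1]. destruct (up_unb a x) as [k2 H2].
  assert (forall j : nat, x < itZ (- Z.of_nat k1 + Z.of_nat j) a -> exists n, block a x n).
  { induction j; intros h.
    - rewrite Z.add_0_r in h. lra.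
    - destruct (Rle_lt_dec (itZ (- Z.of_nat k1 + Z.of_nat j) a) x) as [h2|h2].
      + exists (- Z.of_nat k1 + Z.of_nat j)%Z. split; auto.
        rewrite Nat2Z.inj_succ, Z.add_succ_r in h. auto.
      + apply IHj; auto. }
  apply (H (k1 + k2)%nat). rewrite Nat2Z.inj_add.
  replace (- Z.of_nat k1 + (Z.of_nat k1 + Z.of_nat k2))%Z with (Z.of_nat k2) by lia. auto.
Qed.

Lemma block_uniq a x n m : block a x n -> block a x m -> n = m.
Proof.
  intros [h1 h2] [h3 h4]. destruct (Z.lt_total n m) as [c|[c|c]]; auto; exfalso.
  - pose proof (itZ_mono_idx_le (Z.succ n) m a ltac:(lia)). lra.
  - pose proof (itZ_mono_idx_le (Z.succ m) n a ltac:(lia)). lra.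
Qed.

Definition bidx a x : Z := proj1_sig (constructive_indefinite_description _ (block_ex a x)).
Lemma bidx_spec a x : block a x (bidx a x).
Proof. unfold bidx. destruct (constructive_indefinite_description _ _); auto. Qed.

Definition theta a x : R := IZR (bidx a x) + (itZ (- bidx a x) x - a) / (f a - a).

Lemma theta_eq a x n : block a x n -> theta a x = IZR n + (itZ (- n) x - a) / (f a - a).
Proof. intros h. unfold theta. rewrite (block_uniq a x (bidx a x) n); auto. apply bidx_spec. Qed.

Lemma block_frac a x n : block a x n -> a <= itZ (- n) x < f a.
Proof.
  intros [h1 h2]. split.
  - replace a with (itZ (- n) (itZ n a)) by (rewrite <- itZ_add, Z.add_opp_diag_l; auto).
    destruct h1 as [h1|h1]. left; apply itZ_incr; auto. rewrite h1; lra.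
  - rewrite <- itZ_1. replace (itZ 1 a) with (itZ (- n) (itZ (Z.succ n) a)).
    + apply itZ_incr; auto.
    + rewrite <- itZ_add. f_equal. lia.
Qed.

Lemma theta_itZ a x k : theta a (itZ k x) = theta a x + IZR k.
Proof.
  set (n := bidx a x). pose proof (bidx_spec a x) as hb. fold n in hb.
  assert (hb' : block a (itZ k x) (n + k)).
  { destruct hb as [h1 h2]. split.
    - rewrite Z.add_comm, itZ_add. destruct h1 as [h1|h1]. left; apply itZ_incr; auto. rewrite h1; lra.
    - replace (Z.succ (n + k)) with (k + Z.succ n)%Z by lia. rewrite itZ_add. apply itZ_incr; auto. }
  rewrite (theta_eq a _ _ hb'), (theta_eq a _ _ hb). rewrite <- itZ_add.
  replace (- (n + k) + k)%Z with (- n)%Z by lia. rewrite plus_IZR. ring.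
Qed.

Lemma theta_incr a x y : x < y -> theta a x < theta a y.
Proof.
  intros h. pose proof (Hgt a) as ha.
  pose proof (bidx_spec a x) as hx. pose proof (bidx_spec a y) as hy.
  set (n := bidx a x) in *. set (m := bidx a y) in *.
  rewrite (theta_eq a x n hx), (theta_eq a y m hy).
  pose proof (block_frac a x n hx). pose proof (block_frac a y m hy).
  destruct (Z.lt_total n m) as [c|[c|c]].
  - assert (IZR n + 1 <= IZR m) by (rewrite <- plus_IZR; apply IZR_le; lia).
    assert ((itZ (- n) x - a) / (f a - a) < 1).
    { apply (Rmult_lt_reg_r (f a - a)); [lra|]. field_simplify; lra. }
    assert (0 <= (itZ (- m) y - a) / (f a - a)).
    { unfold Rdiv. apply Rmult_le_pos; [lra|]. left; apply Rinv_0_lt_compat; lra. }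
    lra.
  - rewrite <- c. apply Rplus_lt_compat_l. unfold Rdiv. apply Rmult_lt_compat_r.
    + apply Rinv_0_lt_compat; lra.
    + pose proof (itZ_incr (- n) x y h). lra.
  - exfalso. destruct hx as [hx1 _]. destruct hy as [_ hy2].
    pose proof (itZ_mono_idx_le (Z.succ m) n a ltac:(lia)). lra.
Qed.

Lemma theta_surj a s : exists x, theta a x = s.
Proof.
  pose proof (Hgt a) as ha. destruct (archimed s) as [h1 h2].
  set (n := (up s - 1)%Z).
  assert (hn : IZR n <= s < IZR n + 1) by (unfold n; rewrite minus_IZR; lra).
  set (r := s - IZR n).
  set (y := itZ n (a + r * (f a - a))).
  assert (hb : block a y n).
  { unfold y. split.
    - assert (a <= a + r * (f a - a)) by (unfold r; nra).
      destruct H as [H|H]. left; apply itZ_incr; auto. rewrite <- H; lra.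
    - replace (Z.succ n) with (n + 1)%Z by lia. rewrite itZ_add. change (itZ 1 a) with (f a).
      apply itZ_incr. unfold r; nra. }
  exists y. rewrite (theta_eq a y n hb). unfold y. rewrite <- itZ_add, Z.add_opp_diag_l, itZ_0.
  unfold r. field. lra.
Qed.


Lemma equiv_itZ x y : phi_equiv f x y <-> exists n, y = itZ n x.
Proof.
  split.
  - intros H. induction H.
    + exists 1%Z. rewrite H. reflexivity.
    + exists 0%Z. reflexivity.
    + destruct IHclos_refl_sym_trans as [n ->]. exists (- n)%Z.
      rewrite <- itZ_add, Z.add_opp_diag_l. reflexivity.
    + destruct IHclos_refl_sym_trans1 as [n ->]. destruct IHclos_refl_sym_trans2 as [m ->].
      exists (m + n)%Z. rewrite itZ_add. auto.
  - intros [n ->]. revert n. apply Z.peano_ind.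
    + apply rst_refl.
    + intros n IH. eapply rst_trans; [exact IH|]. apply rst_step. rewrite itZ_succ. auto.
    + intros n IH. eapply rst_trans; [exact IH|]. apply rst_sym. apply rst_step.
      rewrite <- (Z.succ_pred n) at 1. rewrite itZ_succ. auto.
Qed.

Lemma theta_cont a : continuity (theta a).
Proof. apply incr_surj_cont. apply theta_incr. apply theta_surj. Qed.

Lemma p_eq a x y : ecirc (theta a x) = ecirc (theta a y) <-> phi_equiv f x y.
Proof.
  rewrite equiv_itZ. split.
  - intros H. apply ecirc_eq in H. destruct H as [k Hk]. exists (- k)%Z.
    rewrite <- theta_itZ in Hk. apply (incr_inj _ (theta_incr a)) in Hk. subst x.
    rewrite <- itZ_add, Z.add_opp_diag_l. auto.
  - intros [n ->]. rewrite theta_itZ, ecirc_shift. auto.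
Qed.

End Theta.
Lemma oph_of f : (forall x y, x < y -> f x < f y) -> (forall y, exists x, f x = y) -> oph f.
Proof.
  intros Hi Hs. split; [apply incr_surj_cont; auto|]. split; auto.
  set (h := fun y => proj1_sig (constructive_indefinite_description _ (Hs y))).
  assert (Hh : forall y, f (h y) = y).
  { intros y. unfold h. destruct (constructive_indefinite_description _ _); auto. }
  assert (Hh2 : forall x, h (f x) = x).
  { intros x. apply (incr_inj f Hi). rewrite Hh. auto. }
  exists h. split; [|split; auto].
  apply incr_surj_cont.
  - intros x y hxy. apply (incr_lt_rev f Hi). rewrite !Hh; auto.
  - intros y. exists (f y). auto.
Qed.

Lemma cont_ed f x : continuity_pt f x -> forall eps, 0 < eps -> exists d, 0 < d /\
  forall y, Rabs (y - x) < d -> Rabs (f y - f x) < eps.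
Proof.
  intros H eps he. destruct (H eps he) as [d [hd H']]. exists d. split; auto.
  intros y hy. destruct (Req_dec x y) as [e|ne].
  - subst. unfold Rminus. rewrite Rplus_opp_r, Rabs_R0. auto.
  - apply H'. split; [split; [constructor|auto]|]. exact hy.
Qed.

Lemma dist2_le a b c d : dist2 (a, b) (c, d) <= Rabs (a - c) + Rabs (b - d).
Proof.
  unfold dist2; cbn [fst snd]. rewrite <- (sqrt_pow2 (Rabs (a - c) + Rabs (b - d))).
  - apply sqrt_le_1_alt. rewrite <- (pow2_abs (a - c)), <- (pow2_abs (b - d)).
    pose proof (Rabs_pos (a - c)). pose proof (Rabs_pos (b - d)). nra.
  - pose proof (Rabs_pos (a - c)). pose proof (Rabs_pos (b - d)). lra.
Qed.

Lemma dist2_self z : dist2 z z = 0.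
Proof.
  unfold dist2. replace ((fst z - fst z) ^ 2 + (snd z - snd z) ^ 2) with 0 by ring. apply sqrt_0.
Qed.

Section Circ.
Variable p : R -> R * R.
Hypothesis pon : forall x, on_circle (p x).
Hypothesis psurj : forall z, on_circle z -> exists x, p x = z.
Hypothesis pcont : forall x eps, 0 < eps -> exists d, 0 < d /\
  forall y, Rabs (y - x) < d -> dist2 (p y) (p x) < eps.
Hypothesis popen : forall x eps, 0 < eps -> exists d, 0 < d /\
  forall w, on_circle w -> dist2 w (p x) < d -> exists y, Rabs (y - x) < eps /\ p y = w.

Lemma circ_open_iff (U : R * R -> Prop) : (forall z, U z -> on_circle z) ->
  (circle_open U <-> R_open (fun x => U (p x))).
Proof.
  intros HU. split.
  - intros H x Hx. destruct (H _ Hx) as [eps [he H']].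
    destruct (pcont x eps he) as [d [hd Hd]]. exists d. split; [auto|].
    intros y hy. apply H'; auto.
  - intros H z Hz. destruct (psurj z (HU z Hz)) as [x <-].
    destruct (H x Hz) as [eps [he H']]. destruct (popen x eps he) as [d [hd Hd]].
    exists d. split; [auto|]. intros w hw hdw. destruct (Hd w hw hdw) as [y [hy <-]]. auto.
Qed.

Variable G : Group.
Variable psi : gcar G -> R -> R.
Hypothesis hact : oph_action G psi.
Hypothesis hcompat : forall g x y, p x = p y -> p (psi g x) = p (psi g y).

Lemma qsec_ex z : exists x, on_circle z -> p x = z.
Proof.
  destruct (classic (on_circle z)) as [h|h].
  - destruct (psurj z h) as [x Hx]. eauto.
  - exists 0. intros; contradiction.
Qed.

Definition qsec z := proj1_sig (constructive_indefinite_description _ (qsec_ex z)).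
Lemma qsec_spec z : on_circle z -> p (qsec z) = z.
Proof. unfold qsec. destruct (constructive_indefinite_description _ _); auto. Qed.

Definition hmap (g : gcar G) z := p (psi g (qsec z)).

Lemma hmap_p g x : hmap g (p x) = p (psi g x).
Proof. unfold hmap. apply hcompat. apply qsec_spec. auto. Qed.

Lemma hmap_cont g : circle_continuous (hmap g).
Proof.
  intros z hz eps he. destruct (psurj z hz) as [x0 <-].
  destruct (pcont (psi g x0) eps he) as [d1 [hd1 Hd1]].
  destruct hact as [Ho _]. destruct (Ho g) as [Hc _].
  destruct (cont_ed _ _ (Hc x0) d1 hd1) as [d2 [hd2 Hd2]].
  destruct (popen x0 d2 hd2) as [d [hd Hd]]. exists d. split; [auto|].
  intros w hw hdw. destruct (Hd w hw hdw) as [y [hy <-]].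
  rewrite !hmap_p. apply Hd1. apply Hd2. auto.
Qed.

Lemma hmap_homeo g : circle_homeo (hmap g).
Proof.
  split; [intros; apply pon|]. split; [apply hmap_cont|].
  exists (hmap (ginv G g)). split; [intros; apply pon|]. split; [apply hmap_cont|].
  split; intros z hz; destruct (psurj z hz) as [x <-]; rewrite !hmap_p.
  - rewrite ps_inv1; auto.
  - rewrite ps_inv2; auto.
Qed.

Lemma hmap_one z : on_circle z -> hmap (gone G) z = z.
Proof. intros hz. destruct (psurj z hz) as [x <-]. rewrite hmap_p, ps_one; auto. Qed.

Lemma hmap_mul g g' z : on_circle z -> hmap (gmul G g g') z = hmap g (hmap g' z).
Proof. intros hz. destruct (psurj z hz) as [x <-]. rewrite !hmap_p, ps_mul; auto. Qed.

End Circ.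
Lemma ecomp_cont1 th : continuity th -> continuity (fun x => fst (ecirc (th x))).
Proof.
  intros H. unfold ecirc; cbn [fst].
  change (continuity (comp cos (mult_real_fct (2 * PI) th))).
  apply continuity_comp; [apply continuity_scal; auto|apply continuity_cos].
Qed.

Lemma ecomp_cont2 th : continuity th -> continuity (fun x => snd (ecirc (th x))).
Proof.
  intros H. unfold ecirc; cbn [snd].
  change (continuity (comp sin (mult_real_fct (2 * PI) th))).
  apply continuity_comp; [apply continuity_scal; auto|apply continuity_sin].
Qed.

Lemma ecomp_pcont th : continuity th -> forall x eps, 0 < eps -> exists d, 0 < d /\
  forall y, Rabs (y - x) < d -> dist2 (ecirc (th y)) (ecirc (th x)) < eps.
Proof.
  intros H x eps he.
  destruct (cont_ed _ x (ecomp_cont1 th H x) (eps/2) ltac:(lra)) as [d1 [h1 H1]].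
  destruct (cont_ed _ x (ecomp_cont2 th H x) (eps/2) ltac:(lra)) as [d2 [h2 H2]].
  exists (Rmin d1 d2). split; [apply Rmin_glb_lt; auto|].
  intros y hy. specialize (H1 y ltac:(pose proof (Rmin_l d1 d2); lra)).
  specialize (H2 y ltac:(pose proof (Rmin_r d1 d2); lra)).
  destruct (ecirc (th y)) as [a b] eqn:E1. destruct (ecirc (th x)) as [c d] eqn:E2.
  cbn [fst snd] in H1, H2. pose proof (dist2_le a b c d). lra.
Qed.

Lemma ecomp_popen th : (forall x y, x < y -> th x < th y) -> (forall s, exists x, th x = s) ->
  forall x eps, 0 < eps -> exists d, 0 < d /\
  forall w, on_circle w -> dist2 w (ecirc (th x)) < d -> exists y, Rabs (y - x) < eps /\ ecirc (th y) = w.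
Proof.
  intros Hi Hs x eps he.
  assert (h1 : th (x - eps) < th x) by (apply Hi; lra).
  assert (h2 : th x < th (x + eps)) by (apply Hi; lra).
  set (d1 := Rmin (th x - th (x - eps)) (th (x + eps) - th x)).
  assert (hd1 : 0 < d1) by (apply Rmin_glb_lt; lra).
  destruct (ecirc_open (th x) d1 hd1) as [d [hd Hd]].
  exists d. split; [auto|]. intros w hw hdw. destruct (Hd w hw hdw) as [s [hs <-]].
  destruct (Hs s) as [y <-]. exists y. split; auto.
  pose proof (Rmin_l (th x - th (x - eps)) (th (x + eps) - th x)).
  pose proof (Rmin_r (th x - th (x - eps)) (th (x + eps) - th x)). fold d1 in H, H0.
  apply Rabs_def2 in hs. destruct hs.
  assert (x - eps < y) by (apply (incr_lt_rev th Hi); lra).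
  assert (y < x + eps) by (apply (incr_lt_rev th Hi); lra).
  apply Rabs_def1; lra.
Qed.

Lemma equiv_psi (G : Group) (psi : gcar G -> R -> R) (phi : R -> R) :
  (forall g x, phi (psi g x) = psi g (phi x)) ->
  forall g x y, phi_equiv phi x y -> phi_equiv phi (psi g x) (psi g y).
Proof.
  intros Hc g x y H. induction H.
  - apply rst_step. rewrite H, Hc. auto.
  - apply rst_refl.
  - apply rst_sym; auto.
  - eapply rst_trans; eauto.
Qed.

Theorem mainTheorem6 (G : Group) (psi : gcar G -> R -> R)
  (hfg : finitely_generated G)
  (hact : oph_action G psi)
  (hmin : minimal_action G psi)
  (hsome : exists a b, a < b /\ contractible G psi a b)
  (hnot : ~ (forall a b, a <= b -> contractible G psi a b)) :
  exists phi : R -> R,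
    (forall x, is_lub (fun y => x < y /\ contractible G psi x y) (phi x)) /\
    oph phi /\
    (forall x, phi x > x) /\
    (forall g x, phi (psi g x) = psi g (phi x)) /\
    exists p : R -> R * R,
      (forall x, on_circle (p x)) /\
      (forall z, on_circle z -> exists x, p x = z) /\
      (forall x y, p x = p y <-> phi_equiv phi x y) /\
      continuity (fun x => fst (p x)) /\ continuity (fun x => snd (p x)) /\
      (forall U : R * R -> Prop, (forall z, U z -> on_circle z) ->
         (circle_open U <-> R_open (fun x => U (p x)))) /\
      exists h : gcar G -> R * R -> R * R,
        (forall g, circle_homeo (h g)) /\
        (forall g x, h g (p x) = p (psi g x)) /\
        (forall z, on_circle z -> h (gone G) z = z) /\
        (forall g g' z, on_circle z -> h (gmul G g g') z = h g (h g' z)).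
Proof.
  assert (Hne : forall x, exists y, Sset G psi x y) by (apply S_ne; auto).
  assert (Hbd : forall x, bound (Sset G psi x)) by (apply S_bnd; auto).
  assert (Hlub : forall x, {m | is_lub (Sset G psi x) m}) by (intro x; apply completeness; auto).
  set (phi := fun x => proj1_sig (Hlub x)).
  assert (Hphi : forall x, is_lub (Sset G psi x) (phi x)) by (intro x; unfold phi; destruct (Hlub x); auto).
  assert (Hinc : forall x y, x < y -> phi x < phi y) by (apply (phi_strict G psi); auto).
  assert (Hsur : forall y, exists x, phi x = y) by (apply (phi_surj G psi); auto).
  assert (Hoph : oph phi) by (apply oph_of; auto).
  assert (Hgt : forall x, x < phi x) by (apply (phi_gt G psi); auto).
  assert (Heq : forall g x, phi (psi g x) = psi g (phi x)) by (apply (phi_eqv G psi); auto).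
  exists phi. split; [exact Hphi|]. split; [exact Hoph|]. split; [exact Hgt|]. split; [exact Heq|].
  destruct Hoph as [Hc [[hi [Hic [K1 K2]]] _]].
  set (th := theta phi hi Hc Hic K1 K2 Hgt 0).
  assert (Thi : forall x y, x < y -> th x < th y) by (apply (theta_incr phi hi Hinc)).
  assert (Ths : forall s, exists x, th x = s) by (apply (theta_surj phi hi Hinc)).
  assert (Thc : continuity th) by (apply (theta_cont phi hi Hinc)).
  set (p := fun x => ecirc (th x)).
  assert (pon : forall x, on_circle (p x)) by (intro; apply ecirc_on).
  assert (psurj : forall z, on_circle z -> exists x, p x = z).
  { intros z hz. destruct (ecirc_surj z hz) as [s <-]. destruct (Ths s) as [x <-]. exists x; auto. }
  assert (peq : forall x y, p x = p y <-> phi_equiv phi x y) by (intros; apply (p_eq phi hi Hinc)).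
  assert (pcont := ecomp_pcont th Thc).
  assert (popen := ecomp_popen th Thi Ths).
  assert (hcompat : forall g x y, p x = p y -> p (psi g x) = p (psi g y)).
  { intros g x y H. apply peq. apply peq in H. apply equiv_psi; auto. }
  exists p. split; [auto|]. split; [auto|]. split; [auto|].
  split; [apply ecomp_cont1; auto|]. split; [apply ecomp_cont2; auto|].
  split; [intros U HU; apply (circ_open_iff p pon psurj pcont popen U HU)|].
  exists (hmap p psurj G psi).
  split; [intros g; apply (hmap_homeo p pon psurj pcont popen G psi hact hcompat)|].
  split; [intros g x; apply (hmap_p p pon psurj G psi hcompat)|].
  split; [intros z hz; apply (hmap_one p pon psurj G psi hact hcompat); auto|].
  intros g g' z hz; apply (hmap_mul p pon psurj G psi hact hcompat); auto.
Qed.
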